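(* Let $M=p_1^{n_1}\cdots p_K^{n_K}$ with distinct primes and $n_\nu\in\mathbb{N}$, let $A\oplus B=\mathbb{Z}_M$, and fix $i$. Assume $0\in B$, and that there is $a_0\in A$ such that for every $a\in A\cap\Pi(a_0,p_i^{n_i-1})$ the fiber $a*F_i$ splits with parity $(B,A)$. Then for every $\nu\in\{1,\dots,p_i-1\}$, $$|A\cap\Pi(a_0,p_i^{n_i})|=|A\cap\Pi(a_0+\nu M/p_i,p_i^{n_i})|.$$ Consequently, $\Phi_{p_i^{n_i}}$ divides the mask polynomial of $A\cap\Pi(a_0,p_i^{n_i-1})$.
   Context: $A\oplus B=\mathbb{Z}_M$ means every element of $\mathbb{Z}_M$ is uniquely $a+b$ with $a\in A$, $b\in B$. The mask polynomial of $Y\subset\mathbb{Z}_M$ (viewed in $\{0,\dots,M-1\}$) is $Y(X)=\sum_{y\in Y}X^y$; $\Phi_s$ is the $s$-th cyclotomic polynomial. $\Pi(y,p_i^\alpha)=\{y'\in\mathbb{Z}_M:p_i^\alpha\mid y-y'\}$. $F_i=\{0,M/p_i,\dots,(p_i-1)M/p_i\}$, $x*F_i=\{x+f:f\in F_i\}$. For $Z\subset\mathbb{Z}_M$, $\Sigma_A(Z)=\{a\in A: a+b\in Z\text{ for some }b\in B\}$, $\Sigma_B(Z)=\{b\in B: a+b\in Z\text{ for some }a\in A\}$. A fiber $Z=x*F_i$ splits with parity $(B,A)$ if $p_i^{n_i}\mid b-b'$ for all $b,b'\in\Sigma_B(Z)$ and, for all distinct $a,a'\in\Sigma_A(Z)$,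 $p_i^{n_i-1}\mid a-a'$ but $p_i^{n_i}\nmid a-a'$. *)

(* Defs.v *)
From mathcomp Require Import all_boot all_order all_algebra all_field.
Set Implicit Arguments. Unset Strict Implicit. Unset Printing Implicit Defensive.
Import GRing.Theory.
Local Open Scope ring_scope.

(* Z_M is modelled by 'I_M (residues 0..M-1), addition is (x + y) %% M. *)

Definition tiling (M : nat) (A B : {set 'I_M}) : Prop :=
  forall x : 'I_M, exists! ab : 'I_M * 'I_M,
    [/\ ab.1 \in A, ab.2 \in B & ((ab.1 + ab.2) %% M)%N = x].

Definition Pi (M : nat) (y m : nat) : {set 'I_M} :=
  [set y' : 'I_M | y == y' %[mod m]].

Definition fiber (M p : nat) (x : 'I_M) : {set 'I_M} :=
  [set y : 'I_M | [exists k : 'I_p, (y : nat) == ((x + k * (M %/ p)) %% M)%N]].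

Definition SigmaA (M : nat) (A B Z : {set 'I_M}) : {set 'I_M} :=
  [set a in A | [exists b in B, [exists z in Z, (z : nat) == ((a + b) %% M)%N]]].

Definition SigmaB (M : nat) (A B Z : {set 'I_M}) : {set 'I_M} :=
  [set b in B | [exists a in A, [exists z in Z, (z : nat) == ((a + b) %% M)%N]]].

(* the fiber Z splits with parity (B, A), where n = n_i is the exponent of p in M *)
Definition splits_BA (M p n : nat) (A B Z : {set 'I_M}) : Prop :=
  (forall b b' : 'I_M, b \in SigmaB A B Z -> b' \in SigmaB A B Z ->
     (b = b' %[mod p ^ n])%N) /\
  (forall a a' : 'I_M, a \in SigmaA A B Z -> a' \in SigmaA A B Z -> a != a' ->
     (a = a' %[mod p ^ n.-1])%N /\ (a <> a' %[mod p ^ n])%N).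

Definition mask_poly (M : nat) (Y : {set 'I_M}) : {poly int} :=
  \sum_(y in Y) 'X^(nat_of_ord y).

(* Main.v *)
Require Import Defs.
From mathcomp Require Import all_boot all_order all_algebra all_field all_solvable.
From mathcomp Require Import zify.
Set Implicit Arguments. Unset Strict Implicit. Unset Printing Implicit Defensive.
Import GRing.Theory.
Local Open Scope ring_scope.
Definition Qp (p m : nat) : {poly int} := \sum_(j < p) 'X^(j * m).

Lemma XnQ (p m : nat) : 'X^(m * p) - 1 = ('X^m - 1) * Qp p m :> {poly int}.
Proof.
rewrite exprM subrX1; congr (_ * _); apply: eq_bigr => j _.
by rewrite -exprM mulnC.
Qed.

Lemma Phi_pp (p n : nat) : prime p ->
  'Phi_(p ^ n.+1) = Qp p (p ^ n).
Proof.
move=> pp; have p0 := prime_gt0 pp.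
have N0 : (0 < p ^ n.+1)%N by rewrite expn_gt0 p0.
have m0 : (0 < p ^ n)%N by rewrite expn_gt0 p0.
have R0 : ('X^(p ^ n) - 1 : {poly int}) != 0.
  by apply: monic_neq0; rewrite -[1]/(1%:P) monicXnsubC.
apply: (mulIf R0).
have := prod_Cyclotomic N0.
rewrite (big_rem (p ^ n.+1)%N) /=; last by rewrite -dvdn_divisors.
have -> : \prod_(d <- rem (p ^ n.+1)%N (divisors (p ^ n.+1))) 'Phi_d
          = \prod_(d <- divisors (p ^ n)) 'Phi_d.
  apply: perm_big; apply: uniq_perm; [exact/rem_uniq/divisors_uniq|exact: divisors_uniq|].
  move=> d; rewrite mem_rem_uniq ?divisors_uniq // inE -!dvdn_divisors //.
  apply/andP/idP.
    case=> dN /(dvdn_pfactor _ _ pp) [e le dE]; rewrite dE; apply: dvdn_exp2l.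
    move: le; rewrite leq_eqVlt => /orP [/eqP eE|//].
    by rewrite dE eE eqxx in dN.
  move=> dm; split; last by rewrite expnS dvdn_mull.
  apply/negP => /eqP dE; move: (dvdn_leq m0 dm); rewrite dE leqNgt => /negP; apply.
  by rewrite ltn_exp2l // prime_gt1.
rewrite prod_Cyclotomic // => ->.
by rewrite expnSr XnQ mulrC.
Qed.

Lemma dvd_XN (N y z : nat) : (y %% N = z %% N)%N ->
  ('X^N - 1 : {poly int}) %| 'X^y - 'X^z.
Proof.
wlog yz : y z / (z <= y)%N.
  move=> W E; case: (leqP z y) => h; first exact: W.
  by rewrite -['X^y - _]opprB dvdpNr; apply: W; [exact: ltnW|].
move=> /eqP; rewrite eqn_mod_dvd // => /dvdnP [k kE].
have -> : 'X^y = 'X^z * 'X^(k * N) :> {poly int} by rewrite -exprD -kE subnKC.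
rewrite -{2}['X^z]mulr1 -mulrBr; apply: dvdp_mull.
by rewrite mulnC exprM [in X in _ %| X]subrX1; apply: dvdp_mulIl.
Qed.

Lemma dvdp_sum_int (I : finType) (P : pred I) (F : I -> {poly int}) (d : {poly int}) :
  (forall i, P i -> d %| F i) -> d %| \sum_(i | P i) F i.
Proof.
move=> H; apply: (big_ind (fun q => d %| q)); [exact: dvdp0| |exact: H].
by move=> x y; apply: dvdp_add.
Qed.

Lemma sum_class (m r0 : nat) (k : nat) : (r0 < m)%N ->
  \sum_(0 <= r < k * m | (r %% m == r0)%N) 'X^r = 'X^r0 * Qp k m :> {poly int}.
Proof.
move=> rm; elim: k => [|k IH]; first by rewrite mul0n big_geq // /Qp big_ord0 mulr0.
rewrite (big_cat_nat _ (n := k * m)) //=; last by rewrite mulSn leq_addl.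
rewrite IH /Qp big_ord_recr /= mulrDr; congr (_ + _).
rewrite -{1}[(k * m)%N]add0n big_addn mulSn addnK.
rewrite big_mkord (eq_bigl (fun i : 'I_m => i == Ordinal rm)).
  by rewrite big_pred1_eq /= -exprD addnC.
by move=> i; rewrite /= addnC modnMDl modn_small.
Qed.
Lemma mask_dvd (M p n : nat) (S : {set 'I_M}) (a0 c : nat) :
  prime p ->
  (forall y : 'I_M, y \in S -> (y %% p ^ n = a0 %% p ^ n)%N) ->
  (forall r : nat, (r < p ^ n.+1)%N -> (r %% p ^ n = a0 %% p ^ n)%N ->
       #|[set y in S | (y %% p ^ n.+1 == r)%N]| = c) ->
  'Phi_(p ^ n.+1)%N %| mask_poly S.
Proof.
move=> pp HS Hc; rewrite Phi_pp // /mask_poly.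
set m := (p ^ n)%N; set N := (p ^ n.+1)%N.
have p0 := prime_gt0 pp.
have N0 : (0 < N)%N by rewrite expn_gt0 p0.
have mN : (m %| N)%N by rewrite /N expnS dvdn_mull.
have QN : Qp p m %| 'X^N - 1.
  by rewrite /N expnSr XnQ; apply: dvdp_mulIr.
rewrite (_ : \sum_(y in S) 'X^y = \sum_(y in S) ('X^y - 'X^(y %% N)%N)
            + \sum_(y in S) 'X^(y %% N)%N); last first.
  by rewrite -big_split /=; apply: eq_bigr => y _; rewrite subrK.
apply: dvdp_add.
  apply: dvdp_sum_int => y _; apply: (dvdp_trans QN); apply: dvd_XN.
  by rewrite modn_mod.
pose h (y : 'I_M) : 'I_N := Ordinal (ltn_pmod y N0).
rewrite (partition_big h (fun j : 'I_N => (j %% m == a0 %% m)%N)); last first.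
  by move=> y yS /=; rewrite -(HS _ yS) modn_dvdm.
rewrite (eq_bigr (fun j : 'I_N => 'X^j *+ c)); last first.
  move=> j /eqP jm.
  rewrite (eq_bigr (fun _ => 'X^j)); last by move=> y /andP [_ /eqP <-].
  rewrite (eq_bigl (fun y => y \in [set y in S | (y %% N == j)%N])); last first.
    by move=> y; rewrite !inE.
  by rewrite sumr_const Hc.
rewrite sumrMnl -(big_mkord (fun j => (j %% m == a0 %% m)%N) (fun j => 'X^j)).
rewrite /N expnSr mulnC sum_class; last by rewrite ltn_mod expn_gt0 p0.
by rewrite -mulr_natl mulrA dvdp_mulIr.
Qed.

Local Close Scope ring_scope.

Lemma arith (m p E D r0 : nat) :
  (D * m + r0 + (E + D * p) * m = E * m + r0 + D * (m * p.+1))%N.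
Proof. rewrite mulnS mulnDl mulnDr (mulnC m p) mulnA; lia. Qed.

Lemma PiP (M x y N : nat) : (x %% N = y %% N)%N -> Pi M x N = Pi M y N.
Proof. by move=> E; apply/setP => z; rewrite !inE E. Qed.

Theorem lemma4p8 (M p : nat) (A B : {set 'I_M}) (a0 : 'I_M) :
  prime p -> (p %| M)%N ->
  tiling A B ->
  [exists b in B, (b : nat) == 0%N] ->
  a0 \in A ->
  (forall a : 'I_M, a \in A :&: Pi M a0 (p ^ (logn p M).-1) ->
     splits_BA p (logn p M) A B (fiber p a)) ->
  (forall nu : nat, (0 < nu < p)%N ->
     #|A :&: Pi M a0 (p ^ logn p M)| =
     #|A :&: Pi M (a0 + nu * (M %/ p)) (p ^ logn p M)|) /\
  ('Phi_(p ^ logn p M) %| mask_poly (A :&: Pi M a0 (p ^ (logn p M).-1)))%R.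
Proof.
move=> pp pM til /existsP [b0 /andP [b0B /eqP b00]] a0A Hsp.
have M0 : (0 < M)%N by apply: leq_ltn_trans (ltn_ord a0).
have p0 := prime_gt0 pp; have p1 := prime_gt1 pp.
have n0 : (0 < logn p M)%N by rewrite logn_gt0 mem_primes pp M0 pM.
have [u cpu ME] := pfactor_coprime pp M0.
set k := (logn p M).-1.
have nE : logn p M = k.+1 by rewrite /k prednK.
rewrite nE in ME Hsp *; rewrite /=  in Hsp *.
set m := (p ^ k)%N; set N := (p ^ k.+1)%N.
have NE : N = (m * p)%N by rewrite /N expnSr.
have mN : (m %| N)%N by rewrite NE dvdn_mulr.
have MN : M = (u * N)%N by [].
have NM : (N %| M)%N by rewrite MN dvdn_mull.
have Mp : (M %/ p = u * m)%N by rewrite MN NE mulnA mulnK.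
have Hsp' : forall a : 'I_M, a \in A -> (a %% m = a0 %% m)%N ->
    forall b b' : 'I_M, b \in SigmaB A B (fiber p a) -> b' \in SigmaB A B (fiber p a) ->
    (b = b' %[mod N])%N.
  move=> a aA am b b' hb hb'.
  have [H _] : splits_BA p k.+1 A B (fiber p a) by apply: Hsp; rewrite !inE aA /= am eqxx.
  exact: H.
pose cnt x := #|A :&: Pi M x N|.
have uniqT : forall a1 a2 b1 b2 : 'I_M, a1 \in A -> a2 \in A -> b1 \in B -> b2 \in B ->
    ((a1 + b1) %% M = (a2 + b2) %% M)%N -> a1 = a2.
  move=> a1 a2 b1 b2 h1 h2 h3 h4 E.
  have [ab [_ U]] := til (Ordinal (ltn_pmod (a1 + b1) M0)).
  have e1 := U (a1, b1) (And3 h1 h3 erefl).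
  have e2 := U (a2, b2) (And3 h2 h4 (esym E)).
  by rewrite e1 in e2; case: e2.
have step : forall x, (x %% m = a0 %% m)%N -> (cnt x <= cnt (x + u * m))%N.
  move=> x xm.
  pose z (a : 'I_M) : 'I_M := Ordinal (ltn_pmod (a + u * m) M0).
  have dec : forall w : 'I_M, exists ab : 'I_M * 'I_M,
      [&& ab.1 \in A, ab.2 \in B & ((ab.1 + ab.2) %% M == w)%N].
    move=> w; have [ab [[h1 h2 h3] _]] := til w.
    by exists ab; rewrite h1 h2 h3 eqxx.
  pose g (a : 'I_M) : 'I_M :=
    if [pick ab | [&& ab.1 \in A, ab.2 \in B & ((ab.1 + ab.2) %% M == z a)%N]]
    is Some ab then ab.1 else a.
  have gP : forall a, exists b : 'I_M,
      [/\ g a \in A, b \in B & ((g a + b) %% M = (a + u * m) %% M)%N].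
    move=> a; rewrite /g; case: pickP => [ab /and3P [h1 h2 /eqP h3] | none].
      by exists ab.2; split.
    by have [ab hab] := dec (z a); move: (none ab); rewrite hab.
  have bN : forall a : 'I_M, a \in A -> (a %% N = x %% N)%N -> forall b : 'I_M, b \in B ->
      ((g a + b) %% M = (a + u * m) %% M)%N -> g a \in A -> (b %% N = 0)%N.
    move=> a aA ax b bB E gA.
    have am : (a %% m = a0 %% m)%N.
      by rewrite -(modn_dvdm a mN) ax modn_dvdm.
    have hb : b \in SigmaB A B (fiber p a).
      rewrite inE bB /=; apply/existsP; exists (g a); rewrite gA /=.
      apply/existsP; exists (z a); rewrite inE; apply/andP; split; last by rewrite E.
      by apply/existsP; exists (Ordinal p1); rewrite /= mul1n Mp.
    have hb0 : b0 \in SigmaB A B (fiber p a).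
      rewrite inE b0B /=; apply/existsP; exists a; rewrite aA /=.
      apply/existsP; exists a; rewrite inE; apply/andP; split.
        apply/existsP; exists (Ordinal p0); rewrite /= mul0n addn0 modn_small //.
      by rewrite b00 addn0 modn_small.
    by have := Hsp' a aA am b b0 hb hb0; rewrite b00 mod0n.
  rewrite /cnt -(card_in_imset (f := g) (D := A :&: Pi M x N)); last first.
    move=> a1 a2 /setIP [a1A _] /setIP [a2A _] geq.
    have [b1 [g1A b1B E1]] := gP a1; have [b2 [g2A b2B E2]] := gP a2.
    rewrite geq in E1.
    apply: (uniqT a1 a2 b2 b1) => //.
    apply/eqP; rewrite -(eqn_modDr (u * m)).
    have L : ((a1 + b2 + u * m) %% M = (g a2 + b1 + b2) %% M)%N.
      by rewrite addnAC -modnDml -E1 modnDml.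
    have R : ((a2 + b1 + u * m) %% M = (g a2 + b2 + b1) %% M)%N.
      by rewrite addnAC -modnDml -E2 modnDml.
    by rewrite L R addnAC.
  apply: subset_leq_card; apply/subsetP => _ /imsetP [a aD ->].
  move: aD; rewrite !inE => /andP [aA /eqP xa].
  have [b [gA bB E]] := gP a.
  rewrite gA /=.
  have bz := bN a aA (esym xa) b bB E gA.
  have -> : (g a %% N = (g a + b) %% N)%N by rewrite -modnDmr bz addn0.
  by rewrite -[((g a + b) %% N)%N](modn_dvdm _ NM) E modn_dvdm // -modnDml xa modnDml.
have modm : forall x t, ((x + t * (u * m)) %% m = x %% m)%N.
  by move=> x t; rewrite addnC mulnA modnMDl.
have stept : forall t x, (x %% m = a0 %% m)%N -> (cnt x <= cnt (x + t * (u * m)))%N.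
  elim=> [|t IH] x xm; first by rewrite mul0n addn0.
  apply: (leq_trans (IH x xm)).
  rewrite mulSnr addnA; apply: step.
  by rewrite modm.
have cntP : forall x y, (x %% N = y %% N)%N -> cnt x = cnt y.
  by move=> x y E; rewrite /cnt (PiP M E).
have cop : coprime u p by rewrite coprime_sym.
set kk := (u ^ (totient p).-1)%N.
have kku : (kk * u %% p = 1)%N.
  rewrite /kk -expnSr prednK ?totient_gt0 //.
  by rewrite Euler_exp_totient // modn_small.
have stepm : forall x, (x %% m = a0 %% m)%N -> (cnt x <= cnt (x + m))%N.
  move=> x xm; apply: (leq_trans (stept kk x xm)); rewrite (cntP _ (x + m)) //.
  by rewrite -modnDmr mulnA NE [(m * p)%N]mulnC -muln_modl kku mul1n.
have stepmt : forall t x, (x %% m = a0 %% m)%N -> (cnt x <= cnt (x + t * m))%N.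
  elim=> [|t IH] x xm; first by rewrite mul0n addn0.
  apply: (leq_trans (IH x xm)).
  rewrite mulSnr addnA; apply: stepm.
  by rewrite addnC modnMDl.
have same : forall r, (r %% m = a0 %% m)%N -> cnt r = cnt a0.
  move=> r rm.
  have ea := divn_eq a0 m; have er := divn_eq r m.
  set D := (a0 %/ m)%N in ea; set E := (r %/ m)%N in er.
  have m0 : (0 < m)%N by rewrite expn_gt0 p0.
  have pE : p = (p.-1).+1 by rewrite prednK.
  apply/eqP; rewrite eqn_leq; apply/andP; split.
    apply: (leq_trans (stepmt (D + E * p.-1) r rm)).
    rewrite (cntP _ a0) //.
    have -> : (r + (D + E * p.-1) * m = a0 + E * N)%N.
      by have := arith m p.-1 D E (a0 %% m); rewrite -pE -NE -ea -rm -er.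
    by rewrite addnC modnMDl.
  apply: (leq_trans (stepmt (E + D * p.-1) a0 erefl)).
  rewrite (cntP _ r) //.
  have -> : (a0 + (E + D * p.-1) * m = r + D * N)%N.
    by have := arith m p.-1 E D (a0 %% m); rewrite -pE -NE -rm -er rm -ea.
  by rewrite addnC modnMDl.
split.
  move=> nu /andP [nu0 nup]; rewrite Mp.
  have := stept nu a0 erefl.
  have := stept (p - nu) (a0 + nu * (u * m)) (modm _ _).
  rewrite -addnA -mulnDl subnKC ?(ltnW nup) //.
  rewrite (cntP (a0 + p * (u * m)) a0); last first.
    by rewrite mulnCA (mulnC p m) -NE addnC modnMDl.
  move=> h1 h2; apply/eqP; rewrite eqn_leq h2 /=; exact: h1.
have nN : N = (p ^ k.+1)%N by [].
rewrite nN; apply: (mask_dvd (a0 := a0) (c := cnt a0)) => //.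
  by move=> y; rewrite !inE => /andP [_ /eqP ->].
move=> r rN rm; rewrite -(same r rm) /cnt.
have -> : [set y in A :&: Pi M a0 m | (y %% p ^ k.+1 == r)%N] = A :&: Pi M r N.
  apply/setP => y; rewrite !inE -andbA; congr (_ && _).
  rewrite -/N (modn_small rN) [(r == _)%N]eq_sym.
  apply/andP/idP => [[_ //]|/eqP yr]; split; last exact/eqP.
  by rewrite -(modn_dvdm y mN) yr rm.
by [].
Qed.
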